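(* Let $\Gamma=(V,\nu,\mu)$ be a fuzzy graph on $n$ vertices that is not fuzzy-regular, with maximum fuzzy degree $\Delta$ and minimum fuzzy degree $\delta$. Then $$\sigma^*(\Gamma)\ge\frac{(\Delta-\delta)^2}{n^2}.$$
   Context: A fuzzy graph $\Gamma=(V,\nu,\mu)$ consists of a finite vertex set $V$ with $|V|=n\ge1$, a map $\nu:V\to[0,1]$, and a symmetric map $\mu:V\times V\to[0,1]$ with $\mu(u,v)\le\min(\nu(u),\nu(v))$. The fuzzy degree is $d_\Gamma(v)=\sum_{u\ne v}\mu(v,u)$; $\Gamma$ is fuzzy-regular if all fuzzy degrees are equal. The fuzzy size is $\mathrm{ew}(\Gamma)=\frac12\sum_v d_\Gamma(v)$, $\lambda=2\,\mathrm{ew}(\Gamma)/n$, and the fuzzy sigma index is $\sigma^*(\Gamma)=\frac1n\sum_{v}(d_\Gamma(v)-\lambda)^2$. $\Delta=\max_v d_\Gamma(v)$, $\delta=\min_v d_\Gamma(v)$. *)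

(* Defs.v *)
From mathcomp Require Import all_boot all_order all_algebra.
Set Implicit Arguments. Unset Strict Implicit. Unset Printing Implicit Defensive.
Import Order.TTheory GRing.Theory Num.Theory.
Local Open Scope ring_scope.

Section Fuzzy.
Variables (R : realFieldType) (V : finType).

Definition is_fuzzy_graph (nu : V -> R) (mu : V -> V -> R) : Prop :=
  (forall v, 0 <= nu v <= 1) /\
  (forall u v, 0 <= mu u v <= 1) /\
  (forall u v, mu u v = mu v u) /\
  (forall u v, mu u v <= Num.min (nu u) (nu v)).

Definition fdeg (mu : V -> V -> R) (v : V) : R :=
  \sum_(u | u != v) mu v u.

Definition fuzzy_regular (mu : V -> V -> R) : Prop :=
  forall u v, fdeg mu u = fdeg mu v.

Definition fsize (mu : V -> V -> R) : R := (\sum_v fdeg mu v) / 2.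

Definition flambda (mu : V -> V -> R) : R := 2 * fsize mu / #|V|%:R.

Definition fsigma (mu : V -> V -> R) : R :=
  (\sum_v (fdeg mu v - flambda mu) ^+ 2) / #|V|%:R.

Definition fDelta (v0 : V) (mu : V -> V -> R) : R := \big[Num.max/fdeg mu v0]_v fdeg mu v.
Definition fdelta (v0 : V) (mu : V -> V -> R) : R := \big[Num.min/fdeg mu v0]_v fdeg mu v.

End Fuzzy.

(* Main.v *)
Require Import Defs.
From mathcomp Require Import all_boot all_order all_algebra.
From mathcomp Require Import lra.
Import Order.TTheory GRing.Theory Num.Theory.
Local Open Scope ring_scope.

Theorem proposition2p10 (R : realFieldType) (V : finType) (v0 : V)
  (nu : V -> R) (mu : V -> V -> R) :
  is_fuzzy_graph nu mu ->
  ~ fuzzy_regular mu ->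
  fsigma mu >= (fDelta v0 mu - fdelta v0 mu) ^+ 2 / (#|V|%:R ^+ 2).
Proof.
move=> _ _.
have [a Ha] : exists a, fDelta v0 mu = fdeg mu a.
  rewrite /fDelta; apply: (big_ind (fun x => exists v, x = fdeg mu v)).
  - by exists v0.
  - move=> x y [u ->] [w ->]; case: (leP (fdeg mu u) (fdeg mu w)) => _.
    + by exists w. + by exists u.
  - by move=> i _; exists i.
have [b Hb] : exists b, fdelta v0 mu = fdeg mu b.
  rewrite /fdelta; apply: (big_ind (fun x => exists v, x = fdeg mu v)).
  - by exists v0.
  - move=> x y [u ->] [w ->]; case: (leP (fdeg mu u) (fdeg mu w)) => _.
    + by exists u. + by exists w.
  - by move=> i _; exists i.
rewrite Ha Hb /fsigma.
set l := flambda mu.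
set f := fun v => (fdeg mu v - l) ^+ 2.
have f0 : forall v, 0 <= f v by move=> v; exact: sqr_ge0.
set S := \sum_v (fdeg mu v - l) ^+ 2.
have S0 : 0 <= S by apply: sumr_ge0 => v _; exact: sqr_ge0.
have n0 : (0 < #|V|)%N by apply/card_gt0P; exists v0.
have n0R : 0 < (#|V|%:R : R) by rewrite ltr0n.
case: (eqVneq a b) => [->|nab].
  rewrite subrr expr0n /= mul0r; exact: divr_ge0.
have n2 : (2 <= #|V|)%N.
  rewrite (cardD1 a) inE /= ltnS; apply/card_gt0P; exists b.
  by rewrite !inE eq_sym nab.
have n2R : 2 <= (#|V|%:R : R) by rewrite (ler_nat R 2).
have SH : f a + f b <= S.
  rewrite /S (bigD1 a) //= (bigD1 b) /=; last by rewrite eq_sym nab.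
  rewrite addrA lerDl.
  by apply: sumr_ge0 => v _; exact: sqr_ge0.
have HD : (fdeg mu a - fdeg mu b) ^+ 2 <= 2 * S.
  move: SH; rewrite /f => SH.
  have := sqr_ge0 (fdeg mu a + fdeg mu b - 2 * l).
  nra.
set D := (fdeg mu a - fdeg mu b) ^+ 2 in HD *.
set n := (#|V|%:R : R) in n0R n2R *.
rewrite ler_pdivrMr; last by rewrite exprn_gt0.
rewrite expr2 mulrA -(mulrA S) mulVf ?gt_eqF // mulr1.
nra.
Qed.
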